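(* Let $K\ge2$, $p_1,\dots,p_K\in[0,1]$, $\alpha\in[0,1]$, and let $F:\bigcup_{n\ge1}[0,1]^n\to[0,1]$ be a symmetric function. All sets $I,J$ below are nonempty subsets of $\{1,\dots,K\}$. Let \[ \mathcal U:=\{I: F(p_i:i\in I)\le\alpha\},\qquad \mathcal X:=\{I:\ J\in\mathcal U\text{ for all }J\supseteq I\}, \] and for nonempty $R\subseteq\{1,\dots,K\}$ let $t_\alpha(R):=\max\{|I|: I\subseteq R,\ I\notin\mathcal X\}$ (with $\max\emptyset:=0$) and $f_\alpha(R):=|R|-t_\alpha(R)$. Define \[ D_p^R(j):=\max_{J:\ |R\setminus J|<j}F(p_i:i\in J). \] Then for every nonempty $R$ and every $j\in\{1,\dots,|R|\}$, \[ f_\alpha(R)\ge j\iff D_p^R(j)\le\alpha . \]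
   Context: Symmetric means the value of $F$ does not depend on the order of its arguments. (In the paper $F$ is a symmetric \textit{p}-merging function, but the equivalence uses only the stated definitions.) *)

(* Defs.v *)
From HB Require Import structures.
From mathcomp Require Import all_boot all_order all_algebra.
Set Implicit Arguments. Unset Strict Implicit. Unset Printing Implicit Defensive.
Import Order.TTheory GRing.Theory Num.Theory.
Local Open Scope ring_scope.

Section Defs.
Variables (R : realFieldType) (K : nat).

Definition symmetricF (F : seq R -> R) : Prop :=
  forall s t : seq R, perm_eq s t -> F s = F t.

Definition Fsub (F : seq R -> R) (p : 'I_K -> R) (I : {set 'I_K}) : R :=
  F [seq p i | i <- enum I].

Definition inU F p (alpha : R) (I : {set 'I_K}) : bool :=
  (I != set0) && (Fsub F p I <= alpha).

Definition inX F p (alpha : R) (I : {set 'I_K}) : bool :=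
  (I != set0) && [forall J : {set 'I_K}, (I \subset J) ==> inU F p alpha J].

Definition t_alpha F p (alpha : R) (Rs : {set 'I_K}) : nat :=
  (\max_(I : {set 'I_K} | [&& I \subset Rs, I != set0 & ~~ inX F p alpha I]) #|I|)%N.

Definition f_alpha F p (alpha : R) (Rs : {set 'I_K}) : nat :=
  (#|Rs| - t_alpha F p alpha Rs)%N.

(* The index set is nonempty (J = full set), and F takes values in [0,1],
   so the default value 0 of the iterated max is harmless. *)
Definition D_p F p (Rs : {set 'I_K}) (j : nat) : R :=
  \big[Num.max/0]_(J : {set 'I_K} | (J != set0) && (#|Rs :\: J| < j)%N) Fsub F p J.

End Defs.

(* Main.v *)
Require Import Defs.
From HB Require Import structures.
From mathcomp Require Import all_boot all_order all_algebra.
From mathcomp Require Import zify.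
Import Order.TTheory GRing.Theory Num.Theory.
Local Open Scope ring_scope.

Theorem mainTheorem7 (R : realFieldType) (K : nat) (p : 'I_K -> R) (alpha : R)
  (F : seq R -> R)
  (hK : (2 <= K)%N)
  (hp : forall i, 0 <= p i <= 1)
  (ha : 0 <= alpha <= 1)
  (hsym : symmetricF F)
  (hF : forall s : seq R, s != [::] -> all (fun x => 0 <= x <= 1) s -> 0 <= F s <= 1)
  (Rs : {set 'I_K}) (hR : Rs != set0)
  (j : nat) (hj1 : (1 <= j)%N) (hj2 : (j <= #|Rs|)%N) :
  (j <= f_alpha F p alpha Rs)%N <-> D_p F p Rs j <= alpha.
Proof.
case/andP: ha => ha0 _.
have E : (j <= f_alpha F p alpha Rs)%N = (t_alpha F p alpha Rs <= #|Rs| - j)%N.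
  rewrite /f_alpha; apply/idP/idP => H; lia.
rewrite E /t_alpha /D_p; split.
- move/bigmax_leqP => Ht; apply/bigmax_leP; split => // J /andP [J0 HJ].
  rewrite leNgt; apply/negP => FJ.
  have HI := Ht (Rs :&: J).
  have C := cardsID J Rs.
  have : (#|Rs :&: J| <= #|Rs| - j)%N.
    apply: HI; rewrite subsetIl /=.
    have Hne : Rs :&: J != set0.
      apply/negP => /eqP H0; move: C; rewrite H0 cards0 add0n => C; lia.
    rewrite Hne /= /inX Hne /= negb_forall; apply/existsP; exists J.
    rewrite subsetIr /= /inU J0 /= -ltNge; exact: FJ.
  lia.
- case/bigmax_leP => _ HD; apply/bigmax_leqP => I /and3P [IR I0 IX].
  move: IX; rewrite /inX I0 /= negb_forall => /existsP [J].
  rewrite negb_imply => /andP [IJ]; rewrite /inU negb_and negbK.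
  have J0 : J != set0.
    apply/negP => /eqP H0; move: IJ; rewrite H0 subset0 => /eqP H1.
    by move: I0; rewrite H1 eqxx.
  rewrite (negbTE J0) /= -ltNge => FJ.
  have : ~~ ((J != set0) && (#|Rs :\: J| < j)%N).
    apply/negP => H; have := HD J H; by rewrite leNgt FJ.
  rewrite J0 /= -leqNgt => HJ.
  have S : (#|Rs :\: J| <= #|Rs :\: I|)%N.
    apply: subset_leq_card; exact: setDS.
  have C := cardsID I Rs.
  have : Rs :&: I = I by apply/setIidPr.
  move=> H; rewrite H in C.
  have HJ2 : (j <= #|Rs :\: I|)%N by apply: leq_trans HJ S.
  rewrite -C -addnBA //; exact: leq_addr.
Qed.
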